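(* Let $n,r\ge3$ and let $X$ be the real algebraic variety of $r$-tuples $\{(L_i,H_i)\}_{i=1,\dots,r}$ of flags in $\mathbb{R}^n$ consisting of a line $L_i$ and a hyperplane $H_i\supset L_i$, with the action of $\mathrm{SL}_{n,\mathbb{R}}$. Let $U(\mathbb{R})$ be the set of real $r$-tuples whose complexification is in general position, and let $\theta\colon U(\mathbb{R})/\mathrm{SL}_n(\mathbb{R})\to\mathbb{P}^{!r-1}(\mathbb{R})$ be the map induced by $x\mapsto[s_{\sigma_1}(x):\dots:s_{\sigma_{!r}}(x)]$, where $\sigma_1,\dots,\sigma_{!r}$ are the derangements of $\{1,\dots,r\}$. Then $\theta$ is injective if $n$ is odd or $n>r$, and $\theta$ is two-to-one if $n\le r$ and $n$ is even.
   Context: For a derangement (fixed-point-free permutation) $\sigma$, $s_\sigma(x)=\prod_{i=1}^r\phi_i(v_{\sigma(i)})$, where $v_i$ generates $L_i$ and $\phi_i$ is a (real) linear form with kernel $H_i$; the point $[s_\sigma(x)]_\sigma$ does not depend on these choices, and $!r$ is the number of derangements. General position (for complex flags in $\mathbb{C}^n$): if $n\ge r$, $\dim(L_1+\dots+L_r)=r$, $\dim(H_1\cap\dots\cap H_r)=n-r$, $L_i\cap H_j=0$ for $i\ne j$, and $(L_1+\dots+L_r)\cap(H_1\cap\dots\cap H_r)=0$; if $n<r$, every sub-$n$-tuple indexed by an $n$-element subset of $\{1,\dots,r\}$ satisfies these conditions. $U(\mathbb{R})/\mathrm{SL}_n(\mathbb{R})$ is the set of $\mathrm{SL}_n(\mathbb{R})$-orbits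 in $U(\mathbb{R})$ (these are closed orbits among real semi-stable points). *)

(* Defs.v *)
From HB Require Import structures.
From mathcomp Require Import all_boot all_order all_algebra all_fingroup.
From mathcomp Require Import reals complex.
Set Implicit Arguments. Unset Strict Implicit. Unset Printing Implicit Defensive.
Import Order.TTheory GRing.Theory Num.Theory.
Local Open Scope ring_scope.

(* Convention: vectors of F^n are row vectors 'rV[F]_n; a linear subspace of
   F^n is represented by a square matrix 'M[F]_n whose row space it is
   (mxalgebra).  A point of X (an r-tuple of flags L_i ⊂ H_i, L_i a line,
   H_i a hyperplane) is a pair of families L H : 'I_r -> 'M[F]_n. *)

Section FlagDefs.
Variables (F : fieldType) (n r : nat).
Implicit Types (L H : 'I_r -> 'M[F]_n).

Definition is_flag_tuple L H : Prop :=
  forall i, [/\ \rank (L i) = 1%N, \rank (H i) = n.-1 & (L i <= H i)%MS].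

Definition gp_subtuple L H (S : {set 'I_r}) : Prop :=
  [/\ \rank (\sum_(i in S) L i)%MS = #|S|,
      \rank (\bigcap_(i in S) H i)%MS = (n - #|S|)%N,
      (forall i j, i \in S -> j \in S -> i != j -> \rank (L i :&: H j)%MS = 0%N) &
      \rank ((\sum_(i in S) L i) :&: (\bigcap_(i in S) H i))%MS = 0%N].

Definition general_position L H : Prop :=
  if (r <= n)%N then gp_subtuple L H setT
  else forall S : {set 'I_r}, #|S| = n -> gp_subtuple L H S.

Definition SL_equiv L H L' H' : Prop :=
  exists g : 'M[F]_n, \det g = 1 /\
    forall i, (L i *m g == L' i)%MS /\ (H i *m g == H' i)%MS.

Definition line_gen L (i : 'I_r) : 'rV[F]_n := nz_row (L i).
(* a linear form phi_i with kernel H_i: phi_i(u) = u *m (phi_i)^T, where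
   (phi_i)^T is a nonzero column of cokermx (H i) (so H i *m phi_i^T = 0) *)
Definition hyp_form H (i : 'I_r) : 'rV[F]_n := nz_row (cokermx (H i))^T.
Definition form_app (phi u : 'rV[F]_n) : F := (u *m phi^T) 0 0.

Definition s_sigma L H (s : 'S_r) : F :=
  \prod_(i < r) form_app (hyp_form H i) (line_gen L (s i)).

Definition derangement (s : 'S_r) : bool := [forall i, s i != i].

(* theta(x) = theta(y) in P^{!r-1}(F): the vectors (s_sigma)_{sigma derangement}
   are proportional by a nonzero scalar *)
Definition theta_eq L H L' H' : Prop :=
  exists c : F, c != 0 /\
    forall s : 'S_r, derangement s -> s_sigma L H s = c * s_sigma L' H' s.

End FlagDefs.

Section RealDefs.
Variables (R : realType) (n r : nat).

Definition complexify (A : 'M[R]_n) : 'M[R[i]]_n :=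
  map_mx (fun x : R => Complex x 0) A.

Definition in_U (L H : 'I_r -> 'M[R]_n) : Prop :=
  is_flag_tuple L H /\
  general_position (fun i => complexify (L i)) (fun i => complexify (H i)).

Definition theta_injective : Prop :=
  forall L H L' H' : 'I_r -> 'M[R]_n, in_U L H -> in_U L' H' ->
    theta_eq L H L' H' -> SL_equiv L H L' H'.

Definition theta_two_to_one : Prop :=
  forall L H : 'I_r -> 'M[R]_n, in_U L H ->
    exists L' H' : 'I_r -> 'M[R]_n,
      [/\ in_U L' H', theta_eq L' H' L H, ~ SL_equiv L' H' L H &
        forall L'' H'' : 'I_r -> 'M[R]_n, in_U L'' H'' -> theta_eq L'' H'' L H ->
          SL_equiv L'' H'' L H \/ SL_equiv L'' H'' L' H'].

End RealDefs.

(* Main.v *)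
Require Import Defs.
From HB Require Import structures.
From mathcomp Require Import all_boot all_order all_algebra all_fingroup.
From mathcomp Require Import reals complex.
From mathcomp Require Import ring lra.
From Stdlib Require Import FunctionalExtensionality.
Set Implicit Arguments. Unset Strict Implicit. Unset Printing Implicit Defensive.
Import Order.TTheory GRing.Theory Num.Theory.
Local Open Scope ring_scope.


Lemma next_neq (T : eqType) (p : seq T) x :
  uniq p -> (1 < size p)%N -> x \in p -> next p x != x.
Proof.
case: p => [//|y p'] U S xp; rewrite next_nth xp.
set i := index x (y :: p').
have hi : (i < size (y :: p'))%N by rewrite index_mem.
have Ex : nth y (y :: p') i = x := nth_index y xp.
case: (ltnP i.+1 (size (y :: p'))) => h.
  apply/eqP => E.
  have : nth y (y :: p') i.+1 = nth y (y :: p') i by rewrite Ex -E.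
  by move/eqP; rewrite nth_uniq // => /eqP E2; move: (n_Sn i); rewrite E2.
have Ei : i = size p' by apply/eqP; rewrite eqn_leq -ltnS hi /= -ltnS.
rewrite nth_default; last by rewrite Ei.
apply/eqP => Exy.
have : i = 0%N by rewrite /i Exy /= eqxx.
by move: S; rewrite Ei /= => S E0; rewrite E0 in S.
Qed.

Definition cycperm (T : finType) (p : seq T) (U : uniq p) : {perm T} :=
  perm (can_inj (prev_next U)).

Lemma cycpermE (T : finType) (p : seq T) (U : uniq p) x : cycperm U x = next p x.
Proof. by rewrite permE. Qed.

Lemma exists_notin r (s : seq 'I_r) : (size s < r)%N -> exists m : 'I_r, m \notin s.
Proof.
move=> hs; apply/existsP; rewrite -negb_forall; apply/negP => /forallP H.
have : (#|'I_r| <= #|s|)%N.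
  by apply: subset_leq_card; apply/subsetP => x _; have := H x; rewrite /in_mem /=; case: (_ x).
rewrite card_ord => h; have := leq_trans h (card_size s).
by rewrite leqNgt hs.
Qed.

Section Comb.
Variables (F : fieldType) (r : nat) (Q : 'I_r -> 'I_r -> F) (c : F).
Hypothesis Qnz : forall i j, i != j -> Q i j != 0.
Hypothesis Qd : forall s : 'S_r, derangement s -> \prod_i Q i (s i) = c.

Lemma swap_rel (s : 'S_r) a k : derangement s -> a != k -> s a != k -> s k != a ->
  Q a (s a) * Q k (s k) = Q a (s k) * Q k (s a).
Proof.
move=> ds ak sak ska.
set s' := (tperm a k * s)%g.
have s'E x : s' x = s (tperm a k x) by rewrite permM.
have ds' : derangement s'.
  apply/forallP => x; rewrite s'E; case: tpermP => [->|->|xa xk] //.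
  by move/forallP: ds => /(_ x).
have := Qd ds; rewrite -(Qd ds') (bigD1 a) //= (bigD1 k) 1?eq_sym //=.
rewrite [in RHS](bigD1 a) //= [in RHS](bigD1 k) 1?eq_sym //=.
rewrite !s'E tpermL tpermR.
set P1 := (X in _ * (_ * X) = _).
set P2 := (X in _ = _ * (_ * X)).
have -> : P2 = P1.
  apply: eq_bigr => i /andP[ia ik]; rewrite s'E tpermD // eq_sym //.
have P1nz : P1 != 0.
  rewrite prodf_seq_neq0; apply/allP => i _; apply/implyP => _.
  by apply: Qnz; rewrite eq_sym; move/forallP: ds => /(_ i).
move=> E; apply: (mulIf P1nz); by rewrite -!mulrA.
Qed.

Lemma four_rel a b c' d : uniq [:: a; b; c'; d] ->
  Q a b * Q c' d = Q a d * Q c' b.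
Proof.
move=> U4.
set p := [:: a; b; c'; d] ++ [seq x <- enum 'I_r | x \notin [:: a; b; c'; d]].
have Up : uniq p.
  rewrite cat_uniq U4 filter_uniq ?enum_uniq // andbT.
  by apply/hasPn => x; rewrite mem_filter => /andP[].
have allp x : x \in p.
  rewrite mem_cat mem_filter mem_enum andbT; by case: (x \in _).
have ds : derangement (cycperm Up).
  apply/forallP => x; rewrite cycpermE; apply: next_neq => //.
move: U4 => /=; rewrite !inE !negb_or -!andbA => /and4P[ab ac ad /and4P[bc bd _ cd]].
have sa : cycperm Up a = b by rewrite cycpermE /p /next /= eqxx.
have sc : cycperm Up c' = d.
  rewrite cycpermE /p /next /=. rewrite (eq_sym c' a) (negbTE ac) (eq_sym c' b) (negbTE bc) eqxx //.
have H := @swap_rel _ a c' ds ac; rewrite sa sc in H.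
by apply: H => //; rewrite eq_sym.
Qed.

Lemma three_rel x y z : uniq [:: x; y; z] -> (forall w, w \in [:: x; y; z]) ->
  Q x y * Q y z * Q z x = Q x z * Q z y * Q y x.
Proof.
move=> U3 all3.
have U3' : uniq [:: x; z; y].
  by move: U3; rewrite /= !inE !negb_or => /andP[/andP[-> ->]]; rewrite eq_sym => ->.
move: (U3) => /=; rewrite !inE !negb_or => /andP[/andP[xy xz] /andP[yz _]].
have prodE (s : 'S_r) : \prod_i Q i (s i) = Q x (s x) * Q y (s y) * Q z (s z).
  rewrite (bigD1 x) //= (bigD1 y) 1?eq_sym //= (bigD1 z) /=; last first.
    by rewrite eq_sym xz eq_sym yz.
  rewrite big_pred0 ?mulr1 ?mulrA // => w.
  by have := all3 w; rewrite !inE; case: (w == x); case: (w == y); case: (w == z).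
have der (p : seq 'I_r) (U : uniq p) : size p = 3%N -> (forall w, w \in p) ->
    derangement (cycperm U).
  by move=> sp ap; apply/forallP => w; rewrite cycpermE next_neq // sp.
have all3' w : w \in [:: x; z; y].
  by have := all3 w; rewrite !inE; case: (w == x); case: (w == y); case: (w == z).
have E1 := Qd (der _ U3 erefl all3).
have E2 := Qd (der _ U3' erefl all3').
rewrite !prodE !cycpermE /next /= !eqxx in E1 E2.
rewrite (eq_sym y x) (negbTE xy) (eq_sym z x) (negbTE xz) (eq_sym z y) (negbTE yz) in E1 E2.
rewrite E1 -E2; ring.
Qed.

Lemma uniq4 (a b c' d : 'I_r) : a != b -> a != c' -> a != d -> b != c' -> b != d -> c' != d ->
  uniq [:: a; b; c'; d].
Proof.
by move=> *; rewrite /= !inE !negb_or; repeat (apply/andP; split) => //.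
Qed.

Lemma rank1_split : (3 <= r)%N -> exists a b : 'I_r -> F, forall i j, i != j -> Q i j = b i * a j.
Proof.
move=> hr.
have [o _] := @exists_notin r [::] (leq_trans (isT : (1 <= 3)%N) hr).
pose kap i j := Q i o * Q o j / Q i j.
have row i j l : i != o -> j != o -> l != o -> i != j -> j != l -> i != l -> kap i j = kap i l.
  move=> io jo lo ij jl il.
  have h := @four_rel o j i l (uniq4 _ _ _ _ _ _); rewrite ?(eq_sym o) ?(eq_sym j i) in h.
  have {h} h := h jo io lo ij jl il.
  apply/eqP; rewrite /kap eqr_div ?Qnz //; apply/eqP.
  by rewrite -mulrA h; ring.
have col i k j : i != o -> k != o -> j != o -> i != k -> k != j -> i != j -> kap i j = kap k j.
  move=> io ko jo ik kj ij.
  have h := @four_rel i o k j (uniq4 _ _ _ _ _ _); rewrite ?(eq_sym o) in h.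
  have {h} h := h io ik ij ko jo kj.
  apply/eqP; rewrite /kap eqr_div ?Qnz //; apply/eqP.
  by rewrite mulrAC h; ring.
have swp i j : i != o -> j != o -> i != j -> kap i j = kap j i.
  move=> io jo ij.
  have [allin|] := boolP [forall w : 'I_r, w \in [:: o; i; j]].
    have U : uniq [:: o; i; j].
      by rewrite /= !inE !negb_or !(eq_sym o) io jo ij.
    have h := @three_rel o i j U (fun w => forallP allin w).
    apply/eqP; rewrite /kap eqr_div ?Qnz // 1?eq_sym //; apply/eqP.
    transitivity (Q o i * Q i j * Q j o); first ring.
    by rewrite h; ring.
  rewrite negb_forall => /existsP[m]; rewrite !inE !negb_or => /andP[mo /andP[mi mj]].
  rewrite (col i m j) // 1?eq_sym //.
  rewrite (row m j i) // 1?eq_sym //.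
  by rewrite (col m j i) // 1?eq_sym.
have kapC i j k l : i != o -> j != o -> k != o -> l != o -> i != j -> k != l ->
    kap i j = kap k l.
  move=> io jo ko lo ij kl.
  have [/eqP ik|ik] := boolP (i == k).
    subst k; have [/eqP jl|jl] := boolP (j == l); first by subst l.
    by apply: row.
  have [/eqP jl|jl] := boolP (j == l).
    by subst l; apply: col; rewrite // eq_sym.
  have [/eqP li|li] := boolP (l == i).
    subst l; have [/eqP jk|jk] := boolP (j == k).
      by subst k; apply: swp.
    rewrite (col i k j) // 1?eq_sym //.
    by rewrite (row k j i) // 1?eq_sym.
  rewrite (row i j l) // 1?eq_sym //.
  by rewrite (col i k l) // 1?eq_sym.
have [p po] := @exists_notin r [:: o] (leq_trans (isT : (2 <= 3)%N) hr).
have [q] := @exists_notin r [:: o; p] hr.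
rewrite !inE !negb_or => /andP[qo qp].
rewrite inE in po.
set k0 := kap p q.
have k0nz : k0 != 0.
  by rewrite /k0 /kap !mulf_neq0 ?invr_eq0 ?Qnz // 1?eq_sym // eq_sym.
exists (fun j => if j == o then k0 else Q o j).
exists (fun i => if i == o then 1 else Q i o / k0).
move=> i j ij.
have [/eqP io|io] := boolP (i == o).
  subst i; rewrite eq_sym (negbTE ij) mul1r //.
have [/eqP jo|jo] := boolP (j == o).
  by subst j; rewrite divfK.
have := kapC i j p q io jo po qo ij; rewrite eq_sym qp => /(_ isT).
rewrite -/k0 /kap => <-.
by field; rewrite !Qnz // eq_sym.
Qed.

End Comb.


Section LA.
Variables (F : fieldType) (n : nat).

Lemma rank1_prop (K : 'M[F]_n) (u v : 'rV[F]_n) : \rank K = 1%N ->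
  (u <= K)%MS -> (v <= K)%MS -> v != 0 -> exists a, u = a *: v.
Proof.
move=> rK uK vK vnz.
have : (K <= v)%MS.
  have := mxrank_leqif_eq vK; rewrite rank_rV vnz rK => /leqif_refl.
  by move=> E; move/eqmxP: E => [] _ -> .
by move=> Kv; apply/sub_rVP; apply: submx_trans Kv.
Qed.

Lemma rank1_eq (K : 'M[F]_n) (v : 'rV[F]_n) : \rank K = 1%N ->
  (v <= K)%MS -> v != 0 -> (K <= v)%MS.
Proof.
move=> rK vK vnz.
have := mxrank_leqif_eq vK; rewrite rank_rV vnz rK => /leqif_refl.
by move=> E; move/eqmxP: E => [] _ -> .
Qed.

Lemma rV_sub_cap0 (A B : 'M[F]_n) (v : 'rV[F]_n) :
  \rank (A :&: B)%MS = 0%N -> (v <= A)%MS -> (v <= B)%MS -> v = 0.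
Proof.
move=> r0 vA vB; apply/eqP; rewrite -submx0.
have : (v <= A :&: B)%MS by rewrite sub_capmx vA vB.
by move/eqP: r0; rewrite mxrank_eq0 => /eqP ->.
Qed.

Variable r : nat.
Implicit Types (L H : 'I_r -> 'M[F]_n).

Lemma line_gen_sub L i : (line_gen L i <= L i)%MS.
Proof. exact: nz_row_sub. Qed.

Lemma line_gen_nz L i : \rank (L i) = 1%N -> line_gen L i != 0.
Proof.
move=> r1; rewrite /line_gen nz_row_eq0 -mxrank_eq0 r1 //.
Qed.

Lemma line_gen_span L i : \rank (L i) = 1%N -> (L i <= line_gen L i)%MS.
Proof. by move=> r1; apply: rank1_eq => //; [apply: line_gen_sub|apply: line_gen_nz]. Qed.

Lemma hyp_form_ker H i : H i *m (hyp_form H i)^T = 0.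
Proof.
have := nz_row_sub ((cokermx (H i))^T); rewrite -/(hyp_form H i).
case/submxP => D ->; rewrite trmx_mul trmxK mulmxA mulmx_coker mul0mx //.
Qed.

Lemma hyp_form_nz H i : (0 < n)%N -> \rank (H i) = n.-1 -> hyp_form H i != 0.
Proof.
move=> n0 rH; rewrite /hyp_form nz_row_eq0 -mxrank_eq0 mxrank_tr mxrank_coker rH.
by rewrite -subn1 subKn.
Qed.

Lemma hyp_sub H i (u : 'rV[F]_n) : (0 < n)%N -> \rank (H i) = n.-1 ->
  (u <= H i)%MS = (u *m (hyp_form H i)^T == 0).
Proof.
move=> n0 rH; apply/idP/idP.
  by case/submxP => D ->; rewrite -mulmxA hyp_form_ker mulmx0.
rewrite -sub_kermx => uK.
have HK : (H i <= kermx (hyp_form H i)^T)%MS by rewrite sub_kermx hyp_form_ker.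
have rK : \rank (kermx (hyp_form H i)^T) = n.-1.
  by rewrite mxrank_ker mxrank_tr rank_rV hyp_form_nz // subn1.
have := mxrank_leqif_eq HK; rewrite rK rH => /leqif_refl E.
by move/eqmxP: E => E; rewrite E.
Qed.

Lemma hyp_subM H i m (X : 'M[F]_(m, n)) : (0 < n)%N -> \rank (H i) = n.-1 ->
  (X <= H i)%MS = (X *m (hyp_form H i)^T == 0).
Proof.
move=> n0 rH; apply/idP/idP.
  by case/submxP => D ->; rewrite -mulmxA hyp_form_ker mulmx0.
rewrite -sub_kermx => uK.
have HK : (H i <= kermx (hyp_form H i)^T)%MS by rewrite sub_kermx hyp_form_ker.
have rK : \rank (kermx (hyp_form H i)^T) = n.-1.
  by rewrite mxrank_ker mxrank_tr rank_rV hyp_form_nz // subn1.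
have := mxrank_leqif_eq HK; rewrite rK rH => /leqif_refl E.
by move/eqmxP: E => E; rewrite E.
Qed.

Lemma form_prop H i (psi : 'rV[F]_n) : (0 < n)%N -> \rank (H i) = n.-1 ->
  H i *m psi^T = 0 -> exists b, psi = b *: hyp_form H i.
Proof.
move=> n0 rH Hpsi.
pose K := kermx (H i)^T.
have rK : \rank K = 1%N.
  by rewrite mxrank_ker mxrank_tr rH -subn1 subKn.
apply: (rank1_prop rK).
- rewrite sub_kermx; have -> : psi *m (H i)^T = (H i *m psi^T)^T by rewrite trmx_mul trmxK.
  by rewrite Hpsi trmx0.
- rewrite sub_kermx; have -> : hyp_form H i *m (H i)^T = (H i *m (hyp_form H i)^T)^T.
    by rewrite trmx_mul trmxK.
  by rewrite hyp_form_ker trmx0.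
- exact: hyp_form_nz.
Qed.

End LA.


Section Tr.
Variables (F : fieldType) (n : nat).

Lemma rkE m1 m2 (A : 'M[F]_(m1, n)) (B : 'M[F]_(m2, n)) : (A :=: B)%MS -> \rank A = \rank B.
Proof. by move=> E; apply/eqmx_rank/eqmxP. Qed.

Lemma sub_mul_unit m (X : 'M[F]_(m, n)) (Y M : 'M[F]_n) : M \in unitmx ->
  (X <= Y *m M)%MS = (X *m invmx M <= Y)%MS.
Proof.
move=> uM; apply/idP/idP => h.
  by rewrite -[Y](mulmxK uM); apply: submxMr.
by rewrite -[X](mulmxKV uM); apply: submxMr.
Qed.

Lemma capmxMr_unit (A B M : 'M[F]_n) : M \in unitmx ->
  ((A :&: B) *m M == A *m M :&: B *m M)%MS.
Proof.
move=> uM; apply/andP; split; first exact: capmxMr.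
rewrite sub_mul_unit // sub_capmx -!sub_mul_unit //.
by rewrite capmxSl capmxSr.
Qed.

Variable r : nat.
Implicit Types (L H : 'I_r -> 'M[F]_n) (S : {set 'I_r}).

Lemma bigcapMr_unit H S (M : 'M[F]_n) : M \in unitmx ->
  ((\bigcap_(i in S) H i) *m M == \bigcap_(i in S) (H i *m M))%MS.
Proof.
move=> uM.
apply: (big_ind2 (fun (x y : 'M[F]_n) => (x *m M == y)%MS)).
- rewrite mul1mx; apply/andP; split; first exact: submx1.
  by rewrite sub1mx row_full_unit.
- move=> x1 x2 y1 y2 /eqmxP e1 /eqmxP e2.
  have := capmxMr_unit x1 y1 uM => /eqmxP e3.
  apply/eqmxP; apply: eqmx_trans e3 _; exact: cap_eqmx e1 e2.
- by move=> i _; apply/andP; split; exact: submx_refl.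
Qed.

Lemma rank_mul_unit m (A : 'M[F]_(m, n)) (M : 'M[F]_n) : M \in unitmx ->
  \rank (A *m M) = \rank A.
Proof. by move=> uM; rewrite mxrankMfree // row_free_unit. Qed.

Lemma gp_mul L H S (M : 'M[F]_n) : M \in unitmx -> gp_subtuple L H S ->
  gp_subtuple (fun i => L i *m M) (fun i => H i *m M) S.
Proof.
move=> uM [h1 h2 h3 h4]; split.
- by rewrite -(rkE (sumsmxMr _ _ _)) rank_mul_unit.
- by rewrite -(rkE (eqmxP (bigcapMr_unit H S uM))) rank_mul_unit.
- move=> i j iS jS ij.
  by rewrite -(rkE (eqmxP (capmxMr_unit _ _ uM))) rank_mul_unit // h3.
- rewrite -(rkE (cap_eqmx (sumsmxMr _ _ _) (eqmxP (bigcapMr_unit H S uM)))).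
  by rewrite -(rkE (eqmxP (capmxMr_unit _ _ uM))) rank_mul_unit.
Qed.

Lemma gen_pos_mul L H (M : 'M[F]_n) : M \in unitmx -> general_position L H ->
  general_position (fun i => L i *m M) (fun i => H i *m M).
Proof.
rewrite /general_position => uM; case: ifP => _.
  exact: gp_mul.
by move=> h S cS; apply: gp_mul => //; apply: h.
Qed.

Lemma flag_mul L H (M : 'M[F]_n) : M \in unitmx -> is_flag_tuple L H ->
  is_flag_tuple (fun i => L i *m M) (fun i => H i *m M).
Proof.
move=> uM h i; have [h1 h2 h3] := h i; split.
- by rewrite rank_mul_unit.
- by rewrite rank_mul_unit.
- exact: submxMr.
Qed.

End Tr.

Section Cplx.
Variables (R : realType) (n r : nat).
Implicit Types (L H : 'I_r -> 'M[R]_n) (S : {set 'I_r}).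

Lemma complexifyE (A : 'M[R]_n) : complexify A = map_mx (real_complex R) A.
Proof. by []. Qed.

Lemma complexify_mul (A M : 'M[R]_n) : complexify (A *m M) = complexify A *m complexify M.
Proof. by rewrite !complexifyE map_mxM. Qed.

Lemma complexify_unit (M : 'M[R]_n) : (complexify M \in unitmx) = (M \in unitmx).
Proof. by rewrite complexifyE map_unitmx. Qed.

Lemma in_U_mul L H (M : 'M[R]_n) : M \in unitmx -> in_U L H ->
  in_U (fun i => L i *m M) (fun i => H i *m M).
Proof.
move=> uM [fl gp]; split; first exact: flag_mul.
have uC : complexify M \in unitmx by rewrite complexify_unit.
have := gen_pos_mul uC gp.
have E1 : (fun i => complexify (L i) *m complexify M) = (fun i => complexify (L i *m M)).
  by apply: functional_extensionality => i; rewrite complexify_mul.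
have E2 : (fun i => complexify (H i) *m complexify M) = (fun i => complexify (H i *m M)).
  by apply: functional_extensionality => i; rewrite complexify_mul.
by rewrite E1 E2.
Qed.

Lemma map_sums S (A : 'I_r -> 'M[R]_n) :
  (map_mx (real_complex R) (\sum_(i in S) A i)%MS == \sum_(i in S) map_mx (real_complex R) (A i))%MS.
Proof.
apply: (big_ind2 (fun (x : 'M[R]_n) (y : 'M[R[i]]_n) => (map_mx (real_complex R) x == y)%MS)).
- by rewrite map_mx0; apply/andP; split; exact: submx_refl.
- move=> x1 x2 y1 y2 /eqmxP e1 /eqmxP e2; apply/eqmxP.
  apply: eqmx_trans (map_addsmx _ _ _) _; exact: adds_eqmx e1 e2.
- by move=> i _; apply/andP; split; exact: submx_refl.
Qed.

Lemma map_caps S (A : 'I_r -> 'M[R]_n) :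
  (map_mx (real_complex R) (\bigcap_(i in S) A i)%MS == \bigcap_(i in S) map_mx (real_complex R) (A i))%MS.
Proof.
apply: (big_ind2 (fun (x : 'M[R]_n) (y : 'M[R[i]]_n) => (map_mx (real_complex R) x == y)%MS)).
- by rewrite map_mx1; apply/andP; split; exact: submx_refl.
- move=> x1 x2 y1 y2 /eqmxP e1 /eqmxP e2; apply/eqmxP.
  apply: eqmx_trans (map_capmx _ _ _) _; exact: cap_eqmx e1 e2.
- by move=> i _; apply/andP; split; exact: submx_refl.
Qed.

Lemma gp_real L H S :
  gp_subtuple (fun i => complexify (L i)) (fun i => complexify (H i)) S ->
  gp_subtuple L H S.
Proof.
case=> h1 h2 h3 h4; split.
- by rewrite -h1 -(rkE (eqmxP (map_sums S L))) mxrank_map.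
- by rewrite -h2 -(rkE (eqmxP (map_caps S H))) mxrank_map.
- move=> i j iS jS ij; rewrite -(h3 i j iS jS ij).
  by rewrite !complexifyE -(rkE (map_capmx _ _ _)) mxrank_map.
- rewrite -h4 -(rkE (cap_eqmx (eqmxP (map_sums S L)) (eqmxP (map_caps S H)))).
  by rewrite -(rkE (map_capmx _ _ _)) mxrank_map.
Qed.

End Cplx.


Lemma card_S0 r m : (m <= r)%N -> #|[set k : 'I_r | (k < m)%N]| = m.
Proof.
move=> h.
have -> : [set k : 'I_r | (k < m)%N] = [set widen_ord h x | x in 'I_m].
  apply/setP => k; rewrite inE; apply/idP/imsetP.
    by move=> km; exists (Ordinal km) => //; apply: val_inj.
  by case=> x _ ->; rewrite /= ltn_ord.
rewrite card_imset ?card_ord //.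
by move=> x y /(congr1 val) /= /val_inj.
Qed.

Lemma extend_subset (T : finType) (A : {set T}) k : (#|A| <= k)%N -> (k <= #|T|)%N ->
  exists S : {set T}, A \subset S /\ #|S| = k.
Proof.
move=> hA; move: (k - #|A|)%N (subnK hA) => d.
elim: d A {hA} => [|d IH] A hk hT.
  by exists A; split => //; rewrite -hk.
have : (#|A| < #|T|)%N by rewrite -hk addSn in hT; apply: leq_trans hT; rewrite ltnS leq_addl.
move=> lt; have [x xA] : exists x, x \notin A.
  apply/existsP; rewrite -negb_forall; apply/negP => /forallP al.
  have AT : A = setT by apply/setP => y; rewrite inE al.
  by move: lt; rewrite AT cardsT ltnn.
have hk' : (d + #|x |: A|)%N = k by rewrite cardsU1 xA add1n -addSnnS.
have [S [sS cS]] := IH (x |: A) hk' hT.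
by exists S; split => //; apply: subset_trans sS; apply: subsetUr.
Qed.

Lemma mx11_eq0 (F : fieldType) (M : 'M[F]_1) : (M == 0) = (M 0 0 == 0).
Proof.
apply/eqP/eqP => [->|h]; first by rewrite mxE.
by rewrite [M]mx11_scalar h; apply/matrixP => i j; rewrite !mxE; case: (i == j).
Qed.

Section U.
Variables (R : realType) (n r : nat).
Implicit Types (L H : 'I_r -> 'M[R]_n).

Definition Amx L H (i j : 'I_r) : R := form_app (hyp_form H i) (line_gen L j).

Lemma in_U_cap0 L H : (2 <= n)%N -> in_U L H -> forall i j, i != j -> \rank (L i :&: H j) = 0%N.
Proof.
move=> n2 [fl gp] i j ij; move: gp; rewrite /general_position.
case: ifP => hr.
  by case/gp_real => _ _ h3 _; apply: h3; rewrite ?inE.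
move=> gp.
have h2 : (#|[set i; j]| <= n)%N by rewrite cards2 ij.
have [|S [sS cS]] := extend_subset h2; first by rewrite card_ord ltnW // ltnNge hr.
case: (gp_real (gp S cS)) => _ _ h3 _; apply: h3 => //.
- by apply: (subsetP sS); rewrite !inE eqxx.
- by apply: (subsetP sS); rewrite !inE eqxx orbT.
Qed.

Lemma in_U_S0 L H : in_U L H -> gp_subtuple L H [set k : 'I_r | (k < minn n r)%N].
Proof.
case=> fl; rewrite /general_position; case: ifP => hr.
  have -> : [set k : 'I_r | (k < minn n r)%N] = setT.
    by apply/setP => k; rewrite !inE; move/minn_idPr: hr => ->; rewrite ltn_ord.
  exact: gp_real.
move=> gp; apply: gp_real; apply: gp.
rewrite card_S0 ?geq_minr //; apply/minn_idPl; rewrite ltnW // ltnNge hr //.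
Qed.

Lemma Amx_nz L H : (2 <= n)%N -> in_U L H -> forall i j, i != j -> Amx L H i j != 0.
Proof.
move=> n2 U i j ij; have [fl _] := U.
have [rL rH _] := fl j; have [_ rHi _] := fl i.
apply/negP => /eqP A0.
have : line_gen L j = 0.
  have ji : j != i by rewrite eq_sym.
  apply: (rV_sub_cap0 (in_U_cap0 n2 U ji) (line_gen_sub L j)).
  by rewrite hyp_sub ?rHi // ?(leq_trans _ n2) // mx11_eq0; apply/eqP.
by apply/eqP; apply: line_gen_nz.
Qed.

Lemma s_sigmaE L H (s : 'S_r) : s_sigma L H s = \prod_i Amx L H i (s i).
Proof. by []. Qed.

Lemma diag_rel L H L' H' : (2 <= n)%N -> (3 <= r)%N -> in_U L H -> in_U L' H' ->
  theta_eq L H L' H' ->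
  exists a b : 'I_r -> R, [/\ forall i, a i != 0, forall i, b i != 0 &
     forall i j, i != j -> Amx L H i j = b i * a j * Amx L' H' i j].
Proof.
move=> n2 r3 U U' [c [cnz hc]].
pose Q i j := Amx L H i j / Amx L' H' i j.
have Qnz i j : i != j -> Q i j != 0.
  by move=> ij; rewrite mulf_neq0 ?invr_eq0 ?Amx_nz.
have Qd (s : 'S_r) : derangement s -> \prod_i Q i (s i) = c.
  move=> ds; rewrite prodf_div -!s_sigmaE hc ?ds // mulfK //.
  rewrite s_sigmaE prodf_seq_neq0; apply/allP => i _; apply/implyP => _.
  by apply: Amx_nz => //; rewrite eq_sym; move/forallP: ds => /(_ i).
have [a [b hab]] := rank1_split Qnz Qd r3.
have exi j : exists i : 'I_r, i != j.
  have [i0] := @exists_notin r [:: j] (leq_trans (isT : (2 <= 3)%N) r3).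
  by rewrite inE => ?; exists i0.
have abnz i j : i != j -> (b i != 0) && (a j != 0).
  by move=> ij; rewrite -negb_or -mulf_eq0 -hab ?Qnz.
exists a, b; split.
- by move=> j; have [i ij] := exi j; case/andP: (abnz _ _ ij).
- by move=> i; have [j ji] := exi i; rewrite eq_sym in ji; case/andP: (abnz _ _ ji).
move=> i j ij; rewrite -hab // /Q divfK //; exact: Amx_nz.
Qed.

Lemma diag_theta L H L' H' (a b : 'I_r -> R) :
  (forall i, a i != 0) -> (forall i, b i != 0) ->
  (forall i j, i != j -> Amx L H i j = b i * a j * Amx L' H' i j) ->
  theta_eq L H L' H'.
Proof.
move=> anz bnz hab; exists ((\prod_i b i) * \prod_i a i); split.
  by rewrite mulf_neq0 // prodf_seq_neq0; apply/allP => i _; apply/implyP.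
move=> s ds; rewrite !s_sigmaE.
rewrite (eq_bigr (fun i => b i * a (s i) * Amx L' H' i (s i))); last first.
  by move=> i _; apply: hab; rewrite eq_sym; move/forallP: ds => /(_ i).
rewrite !big_split /=; congr (_ * _ * _).
by rewrite [RHS](reindex_inj (@perm_inj _ s)).
Qed.

End U.


Lemma Amx_diag (R : realType) n r (L H : 'I_r -> 'M[R]_n) i :
  (0 < n)%N -> is_flag_tuple L H -> Amx L H i i = 0.
Proof.
move=> n0 fl; have [_ rH LH] := fl i.
have : (line_gen L i <= H i)%MS by apply: submx_trans LH; apply: line_gen_sub.
by rewrite hyp_sub // mx11_eq0 => /eqP.
Qed.

Section Cons.
Variables (R : realType) (n' r' : nat).
Local Notation n := n'.+1.
Local Notation r := r'.+1.
Implicit Types (L H : 'I_r -> 'M[R]_n).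

Definition mm := minn n r.
Definition S0 : {set 'I_r} := [set k : 'I_r | (k < mm)%N].
Definition Wsp H : 'M[R]_n := (\bigcap_(k in S0) H k)%MS.
Definition wrow H (j : nat) : 'rV[R]_n :=
  match (insub j : option 'I_(\rank (Wsp H))) with
  | Some j' => row j' (row_base (Wsp H))
  | None => 0 end.
Definition Bm L H : 'M[R]_n :=
  \matrix_(k < n) (if (k < mm)%N then line_gen L (inord k) else wrow H (k - mm)).

Lemma cS0 : #|S0| = mm.
Proof. by rewrite card_S0 // geq_minr. Qed.

Lemma mm_le_n : (mm <= n)%N. Proof. exact: geq_minl. Qed.

Lemma Bm_row_lt L H (k : 'I_n) : (k < mm)%N -> row k (Bm L H) = line_gen L (inord k).
Proof. by move=> h; rewrite rowK h. Qed.

Lemma Bm_row_ge L H (k : 'I_n) : ~~ (k < mm)%N -> (row k (Bm L H) <= Wsp H)%MS.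
Proof.
move=> h; rewrite rowK (negbTE h) /wrow; case: insubP => [j' _ _|_].
  by apply: submx_trans (row_sub _ _) _; rewrite eq_row_base.
exact: sub0mx.
Qed.

Lemma Bm_unit L H : is_flag_tuple L H -> gp_subtuple L H S0 -> Bm L H \in unitmx.
Proof.
move=> fl [h1 h2 _ h4].
set V := (\sum_(k in S0) L k)%MS; set W := Wsp H.
have rVW : \rank (V + W)%MS = n.
  have := mxrank_sum_cap V W; rewrite h1 h2 h4 addn0 cS0 subnKC //; exact: mm_le_n.
have VB : (V <= Bm L H)%MS.
  apply/sumsmx_subP => k; rewrite inE => km.
  have kn : (k < n)%N by apply: leq_trans km mm_le_n.
  have [rL _ _] := fl k.
  apply: submx_trans (line_gen_span rL) _.
  have := @Bm_row_lt L H (Ordinal kn) km; rewrite /= inord_val => <-.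
  exact: row_sub.
have WB : (W <= Bm L H)%MS.
  rewrite -(eq_row_base W); apply/row_subP => j.
  have jn : (mm + j < n)%N.
    have hj : (j < n - mm)%N by rewrite -cS0 -h2 ltn_ord.
    by rewrite -ltn_subRL.
  have -> : row j (row_base W) = row (Ordinal jn) (Bm L H).
    rewrite rowK /= ltnNge leq_addr /= addKn /wrow.
    case: insubP => [j'' _ ej|nj]; first by congr row; apply: val_inj.
    by move: nj; rewrite ltn_ord.
  exact: row_sub.
have full : (1%:M <= Bm L H)%MS.
  apply: submx_trans (_ : (1%:M <= V + W)%MS) _.
    by rewrite sub1mx /row_full rVW.
  by rewrite addsmx_sub VB WB.
by rewrite -row_full_unit -sub1mx.
Qed.

Definition dvec (a : 'I_r -> R) (e : R) : 'rV[R]_n :=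
  \row_(k < n) (if (k < mm)%N then a (inord k) else if k == ord_max then e else 1).
Definition gmx L H L' H' a e : 'M[R]_n :=
  invmx (Bm L H) *m diag_mx (dvec a e) *m Bm L' H'.

Lemma row_diag (d : 'rV[R]_n) (A : 'M[R]_n) k : row k (diag_mx d *m A) = d 0 k *: row k A.
Proof. by rewrite mul_diag_mx; apply/rowP => j; rewrite !mxE. Qed.

Section Props.
Variables (L H L' H' : 'I_r -> 'M[R]_n) (a b : 'I_r -> R) (e : R).
Hypotheses (fl : is_flag_tuple L H) (fl' : is_flag_tuple L' H').
Hypotheses (gp : gp_subtuple L H S0) (gp' : gp_subtuple L' H' S0).
Hypotheses (anz : forall i, a i != 0) (bnz : forall i, b i != 0) (enz : e != 0).
Hypothesis rel : forall i j, i != j -> Amx L H i j = b i * a j * Amx L' H' i j.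

Local Notation g := (gmx L H L' H' a e).
Let uB : Bm L H \in unitmx := Bm_unit fl gp.
Let uB' : Bm L' H' \in unitmx := Bm_unit fl' gp'.

Lemma gmx_rows : Bm L H *m g = diag_mx (dvec a e) *m Bm L' H'.
Proof. by rewrite /gmx -!mulmxA mulKVmx. Qed.

Lemma dvec_nz k : dvec a e 0 k != 0.
Proof. rewrite mxE; case: ifP => _; first exact: anz. by case: ifP => _ //; exact: oner_neq0. Qed.

Lemma gmx_det : \det g = (\det (Bm L H))^-1 * (\prod_k dvec a e 0 k) * \det (Bm L' H').
Proof. by rewrite /gmx !det_mulmx det_inv det_diag. Qed.

Lemma gmx_unit : g \in unitmx.
Proof.
rewrite unitmxE gmx_det unitfE !mulf_neq0 //.
- by rewrite invr_eq0 -unitfE -unitmxE.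
- by rewrite prodf_seq_neq0; apply/allP => k _; apply/implyP => _; apply: dvec_nz.
- by rewrite -unitfE -unitmxE.
Qed.

Lemma W_sub_H H0 i : i \in S0 -> (Wsp H0 <= H0 i)%MS.
Proof. by move=> iS; rewrite /Wsp (bigD1 i) //= capmxSl. Qed.

Lemma gmx_form i : g *m (hyp_form H' i)^T = (b i)^-1 *: (hyp_form H i)^T.
Proof.
apply: (can_inj (mulKmx uB)); rewrite mulmxA gmx_rows.
apply/row_matrixP => k; rewrite [LHS]row_mul row_diag [RHS]row_mul.
case: (ltnP k mm) => km.
  rewrite !Bm_row_lt // mxE km.
  set j := (inord k : 'I_r).
  have E1 : line_gen L' j *m (hyp_form H' i)^T = (Amx L' H' i j)%:M by rewrite [LHS]mx11_scalar.
  have E2 : line_gen L j *m (hyp_form H i)^T = (Amx L H i j)%:M by rewrite [LHS]mx11_scalar.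
  rewrite -scalemxAl -scalemxAr E1 E2 !scale_scalar_mx; congr (_%:M).
  have [/eqP ij|ij] := boolP (i == j).
    by subst j; rewrite ij !Amx_diag // !mulr0.
  by rewrite rel // -!mulrA mulKf.
have mr : mm = r.
  apply/minn_idPr; rewrite leqNgt; apply/negP => nr.
  move: km; rewrite /mm (elimT minn_idPl (ltnW nr)) => km.
  by move: (ltn_ord k); rewrite ltnNge km.
have iS : i \in S0 by rewrite inE mr ltn_ord.
have [_ rH _] := fl i; have [_ rH' _] := fl' i.
have k0 : row k (Bm L H) *m (hyp_form H i)^T = 0.
  apply/eqP; rewrite -hyp_subM //; apply: submx_trans (Bm_row_ge _ _ _) _.
    by rewrite -leqNgt.
  exact: W_sub_H.
have k0' : row k (Bm L' H') *m (hyp_form H' i)^T = 0.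
  apply/eqP; rewrite -hyp_subM //; apply: submx_trans (Bm_row_ge _ _ _) _.
    by rewrite -leqNgt.
  exact: W_sub_H.
by rewrite -scalemxAl -scalemxAr k0 k0' !scaler0.
Qed.

Lemma gmx_line i : line_gen L i *m g = a i *: line_gen L' i.
Proof.
case: (ltnP i mm) => im.
  have kn : (i < n)%N by apply: leq_trans im mm_le_n.
  have := congr1 (row (Ordinal kn)) gmx_rows.
  rewrite row_mul row_diag !Bm_row_lt //= inord_val mxE im inord_val //.
have mn : mm = n.
  apply/minn_idPl; rewrite leqNgt; apply/negP => rn.
  move: im; rewrite /mm (elimT minn_idPr (ltnW rn)) => im.
  by move: (ltn_ord i); rewrite ltnNge im.
set x := line_gen L i *m g - a i *: line_gen L' i.
have xW : (x <= Wsp H')%MS.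
  apply/sub_bigcapmxP => k; rewrite inE => km.
  have [_ rH' _] := fl' k.
  rewrite hyp_subM // /x mulmxBl -mulmxA gmx_form -scalemxAl -scalemxAr.
  have ki : k != i by apply/eqP => ki; move: km; rewrite ki ltnNge im.
  have E1 : line_gen L' i *m (hyp_form H' k)^T = (Amx L' H' k i)%:M by rewrite [LHS]mx11_scalar.
  have E2 : line_gen L i *m (hyp_form H k)^T = (Amx L H k i)%:M by rewrite [LHS]mx11_scalar.
  by rewrite E1 E2 !scale_scalar_mx rel // -!mulrA mulKf // subrr.
have W0 : Wsp H' = 0.
  by apply/eqP; rewrite -mxrank_eq0; case: gp' => _ -> _ _; rewrite cS0 mn subnn.
by apply/eqP; rewrite -subr_eq0 -/x -submx0 -W0.
Qed.

Lemma gmx_L i : (L i *m g == L' i)%MS.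
Proof.
have [rL _ _] := fl i; have [rL' _ _] := fl' i.
apply/andP; split.
  apply: submx_trans (submxMr _ (line_gen_span rL)) _.
  by rewrite gmx_line scalemx_sub // line_gen_sub.
apply: submx_trans (line_gen_span rL') _.
have -> : line_gen L' i = (a i)^-1 *: (line_gen L i *m g).
  by rewrite gmx_line scalerA mulVf // scale1r.
by rewrite scalemx_sub // submxMr // line_gen_sub.
Qed.

Lemma gmx_H i : (H i *m g == H' i)%MS.
Proof.
have [_ rH _] := fl i; have [_ rH' _] := fl' i.
have sub : (H i *m g <= H' i)%MS.
  rewrite hyp_subM // -mulmxA gmx_form -scalemxAr hyp_form_ker scaler0 //.
have := mxrank_leqif_eq sub; rewrite mxrankMfree ?row_free_unit ?gmx_unit // rH rH'.
by move/leqif_refl.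
Qed.

End Props.

Lemma dvec_prod_le (a : 'I_r -> R) e t : (n <= r)%N ->
  \prod_k dvec (fun i => t * a i) e 0 k = t ^+ n * \prod_k dvec a e 0 k.
Proof.
move=> nr; have mn : mm = n by apply/minn_idPl.
rewrite -[n in t ^+ n]card_ord -prodr_const -big_split /=.
by apply: eq_bigr => k _; rewrite !mxE mn ltn_ord.
Qed.

Lemma dvec_prod_gt (a : 'I_r -> R) e : (r < n)%N ->
  \prod_k dvec a e 0 k = e * \prod_k dvec a 1 0 k.
Proof.
move=> rn; have mr : mm = r by apply/minn_idPr; apply: ltnW.
rewrite [LHS](bigD1 ord_max) // [in RHS](bigD1 ord_max) //= !mxE mr ltnNge -ltnS rn /= eqxx mul1r.
congr (_ * _); apply: eq_bigr => k kn; rewrite !mxE (negbTE kn) //.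
Qed.

Definition maps L H L' H' (g : 'M[R]_n) :=
  forall i, (L i *m g == L' i)%MS /\ (H i *m g == H' i)%MS.

Lemma cons_main L H L' H' (a b : 'I_r -> R) :
  is_flag_tuple L H -> is_flag_tuple L' H' -> gp_subtuple L H S0 -> gp_subtuple L' H' S0 ->
  (forall i, a i != 0) -> (forall i, b i != 0) ->
  (forall i j, i != j -> Amx L H i j = b i * a j * Amx L' H' i j) ->
  exists K, K != 0 /\ forall t, t != 0 -> exists g,
    \det g = (if (r < n)%N then t else t ^+ n) * K /\ maps L H L' H' g.
Proof.
move=> fl fl' gp gp' anz bnz rel.
set K := (\det (Bm L H))^-1 * (\prod_k dvec a 1 0 k) * \det (Bm L' H').
have uB := Bm_unit fl gp; have uB' := Bm_unit fl' gp'.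
exists K; split.
  rewrite /K !mulf_neq0 //.
  - by rewrite invr_eq0 -unitfE -unitmxE.
  - by apply/prodf_neq0 => k _; have := dvec_nz anz (oner_neq0 R) k.
  - by rewrite -unitfE -unitmxE.
move=> t tnz; case: ifP => rn.
  exists (gmx L H L' H' a t); split.
    by rewrite gmx_det dvec_prod_gt // /K; ring.
  move=> i; split; first exact: (gmx_L t fl fl' gp gp' anz bnz rel).
  exact: (gmx_H fl fl' gp gp' anz bnz tnz rel).
have nr : (n <= r)%N by rewrite leqNgt rn.
set a' := fun i => t * a i.
set b' := fun i => b i / t.
have a'nz i : a' i != 0 by rewrite mulf_neq0.
have b'nz i : b' i != 0 by rewrite mulf_neq0 ?invr_eq0.
have rel' i j : i != j -> Amx L H i j = b' i * a' j * Amx L' H' i j.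
  by move=> ij; rewrite rel // /a' /b'; field.
exists (gmx L H L' H' a' 1); split.
  by rewrite gmx_det dvec_prod_le // /K; ring.
move=> i; split.
  exact: (gmx_L 1 fl fl' gp gp' a'nz b'nz rel').
by have := gmx_H fl fl' gp gp' a'nz b'nz (oner_neq0 R) rel' i.
Qed.

End Cons.


Lemma root_pos (R : rcfType) (n : nat) (y : R) : (0 < n)%N -> 0 < y ->
  exists2 t : R, 0 < t & t ^+ n = y.
Proof.
move=> n0 y0.
pose p : {poly R} := 'X^n - y%:P.
have pE x : p.[x] = x ^+ n - y by rewrite /p hornerD hornerN hornerXn hornerC.
have [x /andP[x0 x1] rx] : exists2 x, 0 <= x <= 1 + y & root p x.
  apply: poly_ivt; first by rewrite ler_wpDr // ltW.
  rewrite !pE expr0n (gtn_eqF n0) /= sub0r oppr_le0 (ltW y0) /= subr_ge0.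
  apply: le_trans (ler_eXnr n0 _); first by rewrite lerDr ler01.
  by rewrite lerDl ltW.
move: rx; rewrite /root pE subr_eq0 => /eqP xy.
exists x => //; rewrite lt_neqAle x0 andbT; apply/negP => /eqP x0'.
by move: xy; rewrite -x0' expr0n (gtn_eqF n0) => y0'; move: y0; rewrite -y0' ltxx.
Qed.

Lemma root_odd (R : rcfType) (n : nat) (y : R) : odd n -> exists t : R, t ^+ n = y.
Proof.
move=> on; have n0 : (0 < n)%N by case: n on.
case: (ltgtP y 0) => hy.
- have hy' : 0 < - y by rewrite oppr_gt0.
  have [t _ ht] := root_pos n0 hy'.
  exists (- t); rewrite exprNn -signr_odd on expr1 ht; by rewrite mulN1r opprK.
- by have [t _ ht] := root_pos n0 hy; exists t.
- by exists 0; rewrite hy expr0n (gtn_eqF n0).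
Qed.

Section Theta.
Variables (R : realType) (n r : nat).
Implicit Types (L H : 'I_r -> 'M[R]_n).

Lemma theta_mul L H (M : 'M[R]_n) : (2 <= n)%N -> in_U L H -> M \in unitmx ->
  theta_eq (fun i => L i *m M) (fun i => H i *m M) L H.
Proof.
move=> n2 U uM; have n0 : (0 < n)%N by apply: leq_trans n2.
have [fl _] := U.
set L' := fun i => L i *m M; set H' := fun i => H i *m M.
have fl' : is_flag_tuple L' H' by apply: flag_mul.
have lin i : exists2 al, al != 0 & line_gen L' i = al *: (line_gen L i *m M).
  have [rL _ _] := fl i; have [rL' _ _] := fl' i.
  have vnz : line_gen L i *m M != 0.
    apply/negP => /eqP h; have := line_gen_nz rL; rewrite -[line_gen L i](mulmxK uM) h mul0mx.
    by rewrite eqxx.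
  have [al hal] := rank1_prop rL' (line_gen_sub L' i) (submxMr M (line_gen_sub L i)) vnz.
  exists al => //; apply/negP => /eqP a0; have := line_gen_nz rL'.
  by rewrite hal a0 scale0r eqxx.
have frm i : exists2 be, be != 0 &
    hyp_form H' i = be *: (hyp_form H i *m (invmx M)^T).
  have [_ rH _] := fl i; have [_ rH' _] := fl' i.
  set psi := hyp_form H i *m (invmx M)^T.
  have hpsi : H' i *m psi^T = 0.
    by rewrite /psi /H' trmx_mul trmxK !mulmxA -[H i *m M *m invmx M]mulmxA mulmxV // mulmx1 hyp_form_ker.
  have [be hbe] := form_prop n0 rH' hpsi.
  have psinz : psi != 0.
    apply/negP => /eqP h; have := hyp_form_nz n0 rH.
    have uMt : (invmx M)^T \in unitmx by rewrite unitmx_tr unitmx_inv.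
    by rewrite -[hyp_form H i](mulmxK uMt) -/psi h mul0mx eqxx.
  have benz : be != 0 by apply/negP => /eqP b0; move: psinz; rewrite hbe b0 scale0r eqxx.
  exists be^-1; first by rewrite invr_eq0.
  by rewrite hbe scalerA mulVf // scale1r.
have lin' i : exists al, (al != 0) && (line_gen L' i == al *: (line_gen L i *m M)).
  by have [al h1 h2] := lin i; exists al; rewrite h1 h2 eqxx.
have frm' i : exists be, (be != 0) && (hyp_form H' i == be *: (hyp_form H i *m (invmx M)^T)).
  by have [be h1 h2] := frm i; exists be; rewrite h1 h2 eqxx.
pose al i := xchoose (lin' i).
pose be i := xchoose (frm' i).
have alP i : (al i != 0) && (line_gen L' i == al i *: (line_gen L i *m M)) := xchooseP (lin' i).
have beP i : (be i != 0) && (hyp_form H' i == be i *: (hyp_form H i *m (invmx M)^T)) := xchooseP (frm' i).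
apply: (@diag_theta _ _ _ _ _ _ _ al be).
- by move=> i; case/andP: (alP i).
- by move=> i; case/andP: (beP i).
move=> i j _.
case/andP: (alP j) => _ /eqP hx; case/andP: (beP i) => _ /eqP hy.
set x := al j in hx *; set y := be i in hy *.
rewrite /Amx /form_app hx hy.
have E : (x *: (line_gen L j *m M)) *m (y *: (hyp_form H i *m (invmx M)^T))^T =
    (x * y) *: (line_gen L j *m (hyp_form H i)^T).
  rewrite linearZ /= -scalemxAl -scalemxAr scalerA trmx_mul trmxK; congr (_ *: _).
  by rewrite !mulmxA mulmxK.
by rewrite E [in LHS]mxE [x * y]mulrC.
Qed.

End Theta.

Section Stab.
Variables (R : realType) (n' r' : nat).
Local Notation n := n'.+1.
Local Notation r := r'.+1.
Implicit Types (L H : 'I_r -> 'M[R]_n).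

Lemma stab L H g : (n <= r)%N -> (3 <= r)%N -> (2 <= n)%N -> in_U L H ->
  maps L H L H g -> exists al, g = al%:M.
Proof.
move=> nr r3 n2 U mp; have [fl _] := U.
have gp : gp_subtuple L H (S0 n' r') := in_U_S0 U.
have n0 : (0 < n)%N by [].
have lin j : exists al, line_gen L j *m g == al *: line_gen L j.
  have [rL _ _] := fl j.
  have sub : (line_gen L j *m g <= L j)%MS.
    apply: submx_trans (submxMr g (line_gen_sub L j)) _.
    by case: (mp j) => /andP[] .
  by have [al hal] := rank1_prop rL sub (line_gen_sub L j) (line_gen_nz rL); exists al; rewrite hal.
have frm i : exists be, hyp_form H i *m g^T == be *: hyp_form H i.
  have [_ rH _] := fl i.
  have h : H i *m (hyp_form H i *m g^T)^T = 0.
    rewrite trmx_mul trmxK mulmxA.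
    have : (H i *m g <= H i)%MS by case: (mp i) => _ /andP[].
    by case/submxP => D ->; rewrite -mulmxA hyp_form_ker mulmx0.
  by have [be hbe] := form_prop n0 rH h; exists be; rewrite hbe.
pose al j := xchoose (lin j).
pose be i := xchoose (frm i).
have alP j : line_gen L j *m g = al j *: line_gen L j by apply/eqP; exact: xchooseP (lin j).
have beP i : hyp_form H i *m g^T = be i *: hyp_form H i by apply/eqP; exact: xchooseP (frm i).
have ab i j : i != j -> al j = be i.
  move=> ij.
  have E : (line_gen L j *m g) *m (hyp_form H i)^T = line_gen L j *m (hyp_form H i *m g^T)^T.
    by rewrite trmx_mul trmxK mulmxA.
  rewrite alP beP linearZ /= -scalemxAl -scalemxAr in E.
  rewrite [line_gen L j *m _]mx11_scalar !scale_scalar_mx in E.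
  have := congr1 (fun M : 'M[R]_1 => \det M) E; rewrite /= !det_scalar1.
  have nz : Amx L H i j != 0 by apply: Amx_nz.
  by move=> h; exact: (mulIf nz h).
have alc j k : al j = al k.
  have [i0] := @exists_notin r [:: j; k] r3.
  rewrite !inE negb_or => /andP[ij ik].
  by rewrite (ab i0 j ij) (ab i0 k ik).
set a0 := al ord0.
have uB := Bm_unit fl gp.
have Bg : Bm L H *m g = a0 *: Bm L H.
  apply/row_matrixP => k; rewrite row_mul.
  have km : (k < mm n' r')%N by rewrite /mm (elimT minn_idPl nr) ltn_ord.
  rewrite Bm_row_lt // alP (alc _ ord0).
  by rewrite linearZ /= Bm_row_lt.
exists a0; rewrite -[g](mulKmx uB) Bg -scalemxAr mulVmx // scalemx1 //.
Qed.

End Stab.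


Theorem proposition4p11 (R : realType) (n r : nat) :
  (3 <= n)%N -> (3 <= r)%N ->
  ((odd n \/ (r < n)%N) -> theta_injective R n r) /\
  (((n <= r)%N /\ ~~ odd n) -> theta_two_to_one R n r).
Proof.
case: n => [//|n']; case: r => [//|r'] n3 r3.
have n2 : (2 <= n'.+1)%N by apply: ltnW.
split.
  move=> hyp L H L' H' U U' th.
  have [fl _] := U; have [fl' _] := U'.
  have [a [b [anz bnz rel]]] := diag_rel n2 r3 U U' th.
  have gp : gp_subtuple L H (S0 n' r') := in_U_S0 U.
  have gp' : gp_subtuple L' H' (S0 n' r') := in_U_S0 U'.
  have [K [Knz hK]] := cons_main fl fl' gp gp' anz bnz rel.
  have [rn|rn] := boolP (r'.+1 < n'.+1)%N.
    rewrite rn in hK.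
    have [g [dg mp]] := hK K^-1 (invr_neq0 Knz).
    by exists g; split => //; rewrite dg mulVf.
  rewrite (negbTE rn) in hK.
  have on : odd n'.+1 by case: hyp => // h; rewrite h in rn.
  have [t ht] := root_odd K^-1 on.
  have tnz : t != 0.
    by apply/negP => /eqP t0; move: ht; rewrite t0 expr0n /= => /esym/eqP; rewrite invr_eq0 (negbTE Knz).
  have [g [dg mp]] := hK t tnz.
  by exists g; split => //; rewrite dg ht mulVf.
case=> nr ev L H U.
have [fl _] := U.
pose J : 'M[R]_n'.+1 := diag_mx (\row_(k < n'.+1) if k == ord0 then -1 else 1).
have dJ : \det J = -1.
  rewrite det_diag (bigD1 ord0) //= mxE eqxx big1 ?mulr1 // => k k0.
  by rewrite mxE (negbTE k0).
have uJ : J \in unitmx by rewrite unitmxE dJ unitrN unitr1.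
exists (fun i => L i *m J), (fun i => H i *m J); split.
- exact: in_U_mul.
- exact: theta_mul.
- case=> h [dh mp].
  have mp' : maps L H L H (J *m h).
    by move=> i; rewrite !mulmxA; exact: mp i.
  have [al hal] := stab nr r3 n2 U mp'.
  have := congr1 determinant hal; rewrite det_mulmx dJ dh det_scalar mulr1 => E.
  have := exprn_even_ge0 al ev; rewrite -E.
  by rewrite oppr_ge0 ler10.
move=> L'' H'' U'' th.
have [fl'' _] := U''.
have [a [b [anz bnz rel]]] := diag_rel n2 r3 U'' U th.
have gp : gp_subtuple L H (S0 n' r') := in_U_S0 U.
have gp'' : gp_subtuple L'' H'' (S0 n' r') := in_U_S0 U''.
have [K [Knz hK]] := cons_main fl'' fl gp'' gp anz bnz rel.
have rn : (r'.+1 < n'.+1)%N = false by rewrite ltnNge nr.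
have Kpos : 0 < `|K|^-1 by rewrite invr_gt0 normr_gt0.
have [t t0 ht] := root_pos (isT : (0 < n'.+1)%N) Kpos.
have [g [dg mp]] := hK t (lt0r_neq0 t0).
rewrite rn in dg; rewrite ht in dg.
case: (ltgtP K 0) => hK0; last by move: Knz; rewrite hK0 eqxx.
  right; exists (g *m J); split.
    by rewrite det_mulmx dg dJ ltr0_norm // invrN mulNr mulVf // mulrN1 opprK.
  move=> i; case: (mp i) => /eqmxP h1 /eqmxP h2; rewrite !mulmxA.
  by split; apply/eqmxP; apply: eqmxMr.
left; exists g; split => //.
by rewrite dg gtr0_norm // mulVf.
Qed.
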